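(* Let $r\ge 1$, let $M=(v_1,\dots,v_n)$ be a finite list of nonzero vectors generating $\mathbb{F}_2^r$, let $G=G(\mathbb{F}_2^r,M)$, and let $\lambda_u=n-\sum_{i=1}^n(-1)^{u\cdot v_i}$ for $u\in\mathbb{F}_2^r$. For $1\le j\le r$, the additive order of the class of $x_j-1$ in $$R(G)=\mathbb{Z}[x_1,\dots,x_r]\Big/\Big(x_1^2-1,\dots,x_r^2-1,\ n-\sum_{i=1}^n\prod_{k=1}^r x_k^{(v_i)_k}\Big)$$ equals the minimum positive integer $C$ such that for every $v\in\mathbb{F}_2^r$, $$\frac{C}{2^{r-2}}\sum_{\substack{u\in\mathbb{F}_2^r:\ u\cdot v=1,\ u_j=1}}\frac{1}{\lambda_u}\in\mathbb{Z}.$$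
   Context: The Cayley graph $G$ has vertex set $\mathbb{F}_2^r$ and Laplacian $L(G)$ indexed by $\mathbb{F}_2^r$ with $L(G)_{u,u}=n$ and $L(G)_{u,w}=-\#\{i:u+v_i=w\}$ for $u\ne w$. The $\lambda_u$ are the eigenvalues of $L(G)$, and $\lambda_u>0$ for $u\neq 0$. As abelian groups, $R(G)\cong\operatorname{coker}L(G)$ via identifying the monomial $\prod_k x_k^{w_k}$ ($w\in\mathbb{F}_2^r$) with the standard basis vector $e_w\in\mathbb{Z}^{2^r}$; the class of $x_j-1$ has finite additive order. *)

(* Defs.v *)
From HB Require Import structures.
From mathcomp Require Import all_boot all_order all_algebra.
From mathcomp Require Import mpoly.
Set Implicit Arguments. Unset Strict Implicit. Unset Printing Implicit Defensive.
Import Order.TTheory GRing.Theory Num.Theory.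
Local Open Scope ring_scope.

(* Vectors of F_2^r are row vectors 'rV['F_2]_r; the list M = (v_1,...,v_n)
   is a function v : 'I_n -> 'rV['F_2]_r. *)

Definition dotF2 (r : nat) (u w : 'rV['F_2]_r) : 'F_2 :=
  \sum_(k < r) u 0 k * w 0 k.

Definition lambdaF2 (r n : nat) (v : 'I_n -> 'rV['F_2]_r) (u : 'rV['F_2]_r) : rat :=
  n%:R - \sum_(i < n) (-1) ^+ (nat_of_ord (dotF2 u (v i))).

Definition monoF2 (r : nat) (w : 'rV['F_2]_r) : {mpoly int[r]} :=
  \prod_(k < r) 'X_k ^+ (nat_of_ord (w 0 k)).

Definition in_RG_ideal (r n : nat) (v : 'I_n -> 'rV['F_2]_r) (p : {mpoly int[r]}) : Prop :=
  exists (q : 'I_r -> {mpoly int[r]}) (q0 : {mpoly int[r]}),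
    p = \sum_(k < r) q k * ('X_k ^+ 2 - 1)
        + q0 * (n%:R - \sum_(i < n) monoF2 (v i)).

Definition is_addorder_xj (r n : nat) (v : 'I_n -> 'rV['F_2]_r) (j : 'I_r) (C : nat) : Prop :=
  (0 < C)%N /\ in_RG_ideal v (C%:R * ('X_j - 1)) /\
  (forall C' : nat, (0 < C')%N -> (C' < C)%N -> ~ in_RG_ideal v (C'%:R * ('X_j - 1))).

Definition integrality_cond (r n : nat) (v : 'I_n -> 'rV['F_2]_r) (j : 'I_r) (C : nat) : Prop :=
  forall w : 'rV['F_2]_r,
    (C%:R / (2%:R ^ (r%:Z - 2)) *
      \sum_(u : 'rV['F_2]_r | (dotF2 u w == 1) && (u 0 j == 1)) (lambdaF2 v u)^-1 : rat)
    \is a Num.int.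

Definition least_pos (P : nat -> Prop) (C : nat) : Prop :=
  (0 < C)%N /\ P C /\ (forall C' : nat, (0 < C')%N -> (C' < C)%N -> ~ P C').

(* Main.v *)
Require Import Defs.
From HB Require Import structures.
From mathcomp Require Import all_boot all_order all_algebra.
From mathcomp Require Import mpoly.
From mathcomp Require Import ring.
Import Order.TTheory GRing.Theory Num.Theory.
Local Open Scope ring_scope.
Set Implicit Arguments. Unset Strict Implicit. Unset Printing Implicit Defensive.

Definition sg (R : comRingType) (x : 'F_2) : R := (-1) ^+ (nat_of_ord x).

Lemma F2_cases (x : 'F_2) : x = 0 \/ x = 1.
Proof. case: x => [[|[|k]] Hk] //; [left|right]; exact: val_inj. Qed.

Lemma sgD (R : comRingType) (x y : 'F_2) : sg R (x + y) = sg R x * sg R y.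
Proof.
by case: (F2_cases x) => ->; case: (F2_cases y) => ->; rewrite /sg /= ?expr0 ?expr1 ?mul1r ?mulr1 ?mulrNN ?mulr1.
Qed.

Lemma sg0 (R : comRingType) : sg R 0 = 1. Proof. by rewrite /sg expr0. Qed.

Lemma sgM (R : comRingType) (x : 'F_2) (m : nat) : sg R x ^+ m = sg R (x * m%:R).
Proof.
elim: m => [|m IH]; first by rewrite expr0 mulr0 sg0.
by rewrite exprS IH [m.+1%:R]mulrSr mulrDr mulr1 sgD mulrC.
Qed.

Lemma F2_addxx (x : 'F_2) : x + x = 0.
Proof. case: (F2_cases x) => ->; first by rewrite addr0. by apply: val_inj. Qed.

Lemma sg_sq (R : comRingType) (x : 'F_2) : sg R x * sg R x = 1.
Proof. by rewrite -sgD F2_addxx sg0. Qed.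

Lemma ind_sg (x : 'F_2) : ((x == 1)%:R : rat) = (1 - sg rat x) / 2.
Proof. by case: (F2_cases x) => ->; rewrite /sg /= ?expr0 ?expr1; rewrite ?subrr ?mul0r // opprK; rewrite divff. Qed.

Lemma intr_sg (x : 'F_2) : ((sg int x)%:~R : rat) = sg rat x.
Proof. by rewrite /sg rmorph_sign. Qed.

Section Dot.
Variable r : nat.
Local Notation U := 'rV['F_2]_r.

Lemma dotDr (u a b : U) : dotF2 u (a + b) = dotF2 u a + dotF2 u b.
Proof. by rewrite /dotF2 -big_split /=; apply: eq_bigr => k _; rewrite mxE mulrDr. Qed.

Lemma dotC (u a : U) : dotF2 u a = dotF2 a u.
Proof. by rewrite /dotF2; apply: eq_bigr => k _; rewrite mulrC. Qed.

Lemma dotDl (u a b : U) : dotF2 (a + b) u = dotF2 a u + dotF2 b u.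
Proof. by rewrite !(dotC _ u) dotDr. Qed.

Lemma dot0r (u : U) : dotF2 u 0 = 0.
Proof. by rewrite /dotF2 big1 // => k _; rewrite mxE mulr0. Qed.

Lemma dotZr (u a : U) (c : 'F_2) : dotF2 u (c *: a) = c * dotF2 u a.
Proof. by rewrite /dotF2 mulr_sumr; apply: eq_bigr => k _; rewrite mxE mulrCA. Qed.

Lemma dot_sumr I (s : seq I) P (F : I -> U) (u : U) :
  dotF2 u (\sum_(i <- s | P i) F i) = \sum_(i <- s | P i) dotF2 u (F i).
Proof.
apply: (big_morph (dotF2 u)); [exact: dotDr | exact: dot0r].
Qed.

Lemma dot_delta (u : U) (k : 'I_r) : dotF2 u (delta_mx 0 k) = u 0 k.
Proof.
rewrite /dotF2 (bigD1 k) //= big1 ?addr0; first by rewrite mxE !eqxx mulr1.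
by move=> l /negbTE nlk; rewrite mxE nlk andbF mulr0.
Qed.

Definition chi (u a : U) : rat := sg rat (dotF2 u a).

Lemma card_U : #|{: U}| = (2 ^ r)%N.
Proof. by rewrite card_mx card_Fp // mul1n. Qed.

Lemma orth (a : U) : \sum_(u : U) chi u a = if a == 0 then (2 ^ r)%:R else 0.
Proof.
case: eqP => [->|/eqP].
  rewrite (eq_bigr (fun _ => 1)); last by move=> u _; rewrite /chi dot0r sg0.
  by rewrite sumr_const card_U.
move=> anz.
have : [exists k, a 0 k == 1].
  apply: contraR anz; rewrite negb_exists => /forallP H.
  apply/eqP/matrixP => i k; rewrite ord1 mxE.
  by case: (F2_cases (a 0 k)) => // ak; move: (H k); rewrite ak eqxx.
case/existsP => k /eqP ak.
set S := \sum_u _.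
have HS : S = - S.
  rewrite {1}/S (reindex_inj (addIr (delta_mx 0 k))) /= /S -sumrN.
  apply: eq_bigr => u _; rewrite /chi dotDl sgD [dotF2 (delta_mx _ _) a]dotC dot_delta ak.
  have -> : sg rat 1 = -1 by rewrite /sg expr1.
  by rewrite mulrN1.
have : S *+ 2 == 0 by rewrite mulr2n {1}HS addNr.
by rewrite mulrn_eq0 /= => /eqP.
Qed.

End Dot.

Section Lam.
Variables (r n : nat) (v : 'I_n -> 'rV['F_2]_r).
Local Notation U := 'rV['F_2]_r.

Lemma nz_coord (a : U) : a != 0 -> exists k, a 0 k = 1.
Proof.
move=> anz.
have : [exists k, a 0 k == 1].
  apply: contraR anz; rewrite negb_exists => /forallP H.
  apply/eqP/matrixP => i k; rewrite ord1 mxE.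
  by case: (F2_cases (a 0 k)) => // ak; move: (H k); rewrite ak eqxx.
by case/existsP => k /eqP ak; exists k.
Qed.

Lemma chiD (u a b : U) : chi u (a + b) = chi u a * chi u b.
Proof. by rewrite /chi dotDr sgD. Qed.

Lemma lamE (u : U) : lambdaF2 v u = \sum_(i < n) (1 - chi u (v i)).
Proof. by rewrite /lambdaF2 sumrB sumr_const card_ord. Qed.

Lemma lam_pos (gen : forall u : U, exists c : 'I_n -> 'F_2, u = \sum_(i < n) c i *: v i)
  (u : U) : u != 0 -> 0 < lambdaF2 v u.
Proof.
move=> /nz_coord [k uk].
have [c hc] := gen (delta_mx 0 k).
have : [exists i, dotF2 u (v i) == 1].
  apply: contraT; rewrite negb_exists => /forallP H.
  have : dotF2 u (delta_mx 0 k) = 0.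
    rewrite hc dot_sumr big1 // => i _; rewrite dotZr.
    by case: (F2_cases (dotF2 u (v i))) => h; [rewrite h mulr0 | move: (H i); rewrite h eqxx].
  by rewrite dot_delta uk.
case/existsP => i0 /eqP hi0.
have ge0 : forall x : 'F_2, 0 <= 1 - sg rat x.
  by move=> x; case: (F2_cases x) => ->; rewrite /sg ?expr0 ?expr1 ?subrr // opprK.
rewrite lamE (bigD1 i0) //= /chi hi0.
have -> : sg rat 1 = -1 by rewrite /sg expr1.
rewrite opprK; apply: ltr_wpDr => //.
by apply: sumr_ge0 => i _; apply: ge0.
Qed.

End Lam.

Section Ideal.
Variable r : nat.
Local Notation P := {mpoly int[r]}.
Local Notation U := 'rV['F_2]_r.

Definition I2 (p : P) := exists q : 'I_r -> P, p = \sum_(k < r) q k * ('X_k ^+ 2 - 1).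

Lemma I2_0 : I2 0.
Proof. by exists (fun _ => 0); rewrite big1 // => k _; rewrite mul0r. Qed.

Lemma I2_D p1 p2 : I2 p1 -> I2 p2 -> I2 (p1 + p2).
Proof.
move=> [q1 ->] [q2 ->]; exists (fun k => q1 k + q2 k).
by rewrite -big_split; apply: eq_bigr => k _; rewrite mulrDl.
Qed.

Lemma I2_M m p : I2 p -> I2 (m * p).
Proof.
move=> [q ->]; exists (fun k => m * q k).
by rewrite mulr_sumr; apply: eq_bigr => k _; rewrite mulrA.
Qed.

Lemma I2_N p : I2 p -> I2 (- p).
Proof. by move=> h; rewrite -mulN1r; apply: I2_M. Qed.

Lemma I2_B p1 p2 : I2 p1 -> I2 p2 -> I2 (p1 - p2).
Proof. by move=> h1 h2; apply: I2_D => //; apply: I2_N. Qed.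

Lemma I2_sum I (s : seq I) (Q : pred I) (F : I -> P) :
  (forall i, Q i -> I2 (F i)) -> I2 (\sum_(i <- s | Q i) F i).
Proof. by move=> h; apply: (big_ind I2) => //; [exact: I2_0 | exact: I2_D]. Qed.

Lemma I2_gen k : I2 ('X_k ^+ 2 - 1).
Proof.
exists (fun l => (l == k)%:R).
rewrite (bigD1 k) //= eqxx mul1r big1 ?addr0 // => l /negbTE ->.
by rewrite mul0r.
Qed.

Lemma mono_mul (a b : U) : I2 (monoF2 a * monoF2 b - monoF2 (a + b)).
Proof.
rewrite /monoF2 -big_split /=.
apply: (big_ind2 (fun x y => I2 (x - y))).
- by rewrite subrr; apply: I2_0.
- move=> x1 x2 y1 y2 h1 h2.
  have -> : x1 * y1 - x2 * y2 = y1 * (x1 - x2) + x2 * (y1 - y2).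
    rewrite !mulrBr [y1 * x1]mulrC [x2 * y1]mulrC addrA subrK //.
  by apply: I2_D; apply: I2_M.
- move=> k _; rewrite mxE -exprD.
  case: (F2_cases (a 0 k)) => ->; case: (F2_cases (b 0 k)) => -> /=;
    rewrite ?subrr; try exact: I2_0.
  have e : (Zp_trunc (pdiv 2)).+2 = 2%N by []. rewrite e /= expr0; apply: I2_gen.
Qed.

Lemma in_RG_of_I2 n (v : 'I_n -> U) (p q0 : P) :
  I2 (p - q0 * (n%:R - \sum_(i < n) monoF2 (v i))) -> in_RG_ideal v p.
Proof.
move=> [q hq]; exists q, q0; by rewrite -hq subrK.
Qed.

Lemma mono0 : monoF2 (0 : U) = 1.
Proof. by rewrite /monoF2 big1 // => k _; rewrite mxE expr0. Qed.

Lemma mono_delta (j : 'I_r) : monoF2 (delta_mx 0 j) = 'X_j.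
Proof.
rewrite /monoF2 (bigD1 j) //= mxE !eqxx /= expr1 big1 ?mulr1 // => k /negbTE nkj.
by rewrite mxE nkj andbF expr0.
Qed.

End Ideal.

Lemma natF2 (y : 'F_2) : ((nat_of_ord y)%:R : 'F_2) = y.
Proof. by case: (F2_cases y) => ->; apply: val_inj. Qed.

Section Eval.
Variable r : nat.
Local Notation P := {mpoly int[r]}.
Local Notation U := 'rV['F_2]_r.

Definition xu (u : U) : 'I_r -> int := fun k => sg int (u 0 k).

Lemma sg_sum (R : comRingType) (F : 'I_r -> 'F_2) :
  \prod_(k < r) sg R (F k) = sg R (\sum_(k < r) F k).
Proof. by apply/esym/(big_morph (sg R)); [exact: sgD | exact: sg0]. Qed.

Lemma ev_mono (u a : U) : (monoF2 a).@[xu u] = sg int (dotF2 u a).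
Proof.
rewrite /monoF2 rmorph_prod /= /dotF2 -sg_sum; apply: eq_bigr => k _.
by rewrite rmorphXn /= mevalXU /xu sgM natF2.
Qed.

Lemma ev_gen (u : U) k : ('X_k ^+ 2 - 1 : P).@[xu u] = 0.
Proof. by rewrite rmorphB rmorphXn /= mevalXU rmorph1 expr2 sg_sq subrr. Qed.

Definition rowm (m : 'X_{1..r}) : U := \row_k ((m k)%:R : 'F_2).

Lemma ev_X (u : U) m : ('X_[m] : P).@[xu u] = sg int (dotF2 u (rowm m)).
Proof.
rewrite mevalX /dotF2 -sg_sum; apply: eq_bigr => k _.
by rewrite /xu sgM mxE.
Qed.

Definition evq (u : U) (p : P) : rat := (p.@[xu u])%:~R.

Lemma evq_mono u a : evq u (monoF2 a) = chi u a.
Proof. by rewrite /evq ev_mono intr_sg. Qed.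

Definition Four (p : P) (a : U) : rat := \sum_(u : U) evq u p * chi u a.

Lemma Four_int (p : P) (a : U) : ((2 ^ r)%:R^-1 * Four p a) \is a Num.int.
Proof.
elim/mpolyind: p => [|c m p _ _ IH].
  rewrite /Four big1 ?mulr0 // => u _.
  by rewrite /evq meval0 mul0r.
have -> : Four (c *: 'X_[m] + p) a = c%:~R * Four 'X_[m] a + Four p a.
  rewrite /Four mulr_sumr -big_split /=; apply: eq_bigr => u _.
  by rewrite /evq mevalD mevalZ rmorphD rmorphM /= mulrDl mulrA.
rewrite mulrDr; apply: rpredD => //.
rewrite mulrCA; apply: rpredM; first exact: intr_int.
have -> : Four 'X_[m] a = \sum_(u : U) chi u (rowm m + a).
  apply: eq_bigr => u _; by rewrite /evq ev_X intr_sg chiD.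
rewrite orth; case: eqP => _; last by rewrite mulr0.
by rewrite mulVf // pnatr_eq0 expn_eq0.
Qed.

End Eval.

Lemma pow2z (r : nat) : (2%:R ^ (r%:Z - 2) : rat) = (2 ^ r)%:R / 4%:R.
Proof.
rewrite expfzDr // -exprnN natrX.
by congr (_ * _); rewrite expr2 -natrM.
Qed.

Lemma dot0l r (w : 'rV['F_2]_r) : dotF2 0 w = 0.
Proof. by rewrite dotC dot0r. Qed.

Section ClaimA.
Variables (r n : nat) (v : 'I_n -> 'rV['F_2]_r) (j : 'I_r).
Hypothesis gen : forall u : 'rV['F_2]_r, exists c : 'I_n -> 'F_2, u = \sum_(i < n) c i *: v i.
Local Notation P := {mpoly int[r]}.
Local Notation U := 'rV['F_2]_r.

Lemma key_eval (C : nat) (q : 'I_r -> P) (q0 : P) (u : U) :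
  (C%:R * ('X_j - 1) : P) = \sum_(k < r) q k * ('X_k ^+ 2 - 1)
        + q0 * (n%:R - \sum_(i < n) monoF2 (v i)) ->
  C%:R * (sg rat (u 0 j) - 1) = evq u q0 * lambdaF2 v u.
Proof.
move=> /(congr1 (meval (xu u))).
rewrite !rmorphM !rmorphD !rmorphN ?rmorph1 !rmorph_sum !rmorph_nat /= mevalXU.
rewrite big1 ?add0r; last by move=> k _; rewrite mevalM ev_gen mulr0.
move=> h.
have e1 : C%:R * (sg rat (u 0 j) - 1) = ((C%:R * (xu u j - 1) : int)%:~R : rat).
  by rewrite rmorphM rmorphB /= rmorph_nat intr_sg rmorph1.
rewrite e1 h mevalM rmorphM /=; congr (_ * _).
have ms : forall (F : 'I_n -> P), (\sum_(i < n) F i).@[xu u] = \sum_(i < n) (F i).@[xu u].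
  by move=> F; apply: (big_morph (meval (xu u))); [exact: mevalD | exact: meval0].
have mn : (n%:R : P).@[xu u] = n%:R by rewrite rmorph_nat.
rewrite /lambdaF2 mevalB ms mn rmorphB rmorph_sum rmorph_nat /=.
congr (_ - _); apply: eq_bigr => i _.
by rewrite ev_mono intr_sg.
Qed.

Lemma claimA (C : nat) : in_RG_ideal v (C%:R * ('X_j - 1)) -> integrality_cond v j C.
Proof.
move=> [q [q0 hq]] w.
set N : rat := (2 ^ r)%:R.
have Nnz : N != 0 by rewrite pnatr_eq0 expn_eq0.
have -> : C%:R / 2%:R ^ (r%:Z - 2) *
    \sum_(u : U | (dotF2 u w == 1) && (u 0 j == 1)) (lambdaF2 v u)^-1
    = N^-1 * Four q0 w - N^-1 * Four q0 0.
  rewrite -mulrBr /Four -sumrB.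
  have -> : \sum_(u : U) (evq u q0 * chi u w - evq u q0 * chi u 0)
      = \sum_(u : U) (if (dotF2 u w == 1) && (u 0 j == 1)
                      then 4%:R * C%:R * (lambdaF2 v u)^-1 else 0).
    apply: eq_bigr => u _; rewrite -mulrBr /chi dot0r sg0.
    have hk := key_eval u hq.
    case: (F2_cases (u 0 j)) => uj; rewrite uj /=.
    - rewrite andbF.
      have [->|unz] := eqVneq u 0; first by rewrite dot0l sg0 subrr mulr0.
      have lnz : lambdaF2 v u != 0 by rewrite gt_eqF // lam_pos.
      move: hk; rewrite uj sg0 subrr mulr0 => /esym/eqP.
      by rewrite mulf_eq0 (negbTE lnz) orbF => /eqP ->; rewrite mul0r.
    - have unz : u != 0 by apply/eqP => u0; move: uj; rewrite u0 mxE.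
      have lnz : lambdaF2 v u != 0 by rewrite gt_eqF // lam_pos.
      have he : evq u q0 = C%:R * (sg rat 1 - 1) / lambdaF2 v u.
        by move: hk; rewrite uj => ->; rewrite mulfK.
      rewrite andbT he.
      have -> : sg rat 1 = -1 by rewrite /sg expr1.
      case: (F2_cases (dotF2 u w)) => ->; first by rewrite sg0 subrr mulr0.
      have -> : sg rat 1 = -1 by rewrite /sg expr1.
      rewrite eqxx; ring.

  rewrite -big_mkcond /= -mulr_sumr pow2z invf_div.
  rewrite /N; ring.
by apply: rpredB; apply: Four_int.
Qed.

End ClaimA.

Lemma oppU r (x : 'rV['F_2]_r) : - x = x.
Proof.
apply/matrixP => i k; rewrite !mxE.
by case: (F2_cases (x i k)) => ->; [rewrite oppr0 | apply: val_inj].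
Qed.

Lemma addUK r (x y : 'rV['F_2]_r) : x + y + y = x.
Proof. by rewrite -{2}(oppU y) addrK. Qed.

Lemma addU_eq0 r (x y : 'rV['F_2]_r) : (x + y == 0) = (y == x).
Proof. by rewrite addr_eq0 oppU eq_sym. Qed.

Section ClaimB.
Variables (r n : nat) (v : 'I_n -> 'rV['F_2]_r) (j : 'I_r).
Hypothesis gen : forall u : 'rV['F_2]_r, exists c : 'I_n -> 'F_2, u = \sum_(i < n) c i *: v i.
Local Notation P := {mpoly int[r]}.
Local Notation U := 'rV['F_2]_r.
Variable C : nat.

Definition Kq (a : U) : rat := C%:R / 2%:R ^ (r%:Z - 2) *
      \sum_(u : U | (dotF2 u a == 1) && (u 0 j == 1)) (lambdaF2 v u)^-1.

Let N : rat := (2 ^ r)%:R.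

Lemma K_alt a : Kq a = C%:R * 4%:R / N *
   \sum_(u : U) ((u 0 j == 1)%:R * ((1 - chi u a) / 2%:R * (lambdaF2 v u)^-1)).
Proof.
rewrite /Kq pow2z invf_div mulrA big_mkcond /=; congr (_ * _).
apply: eq_bigr => u _; rewrite -ind_sg.
by case: (u 0 j == 1); case: (dotF2 u a == 1); rewrite /= ?mul1r ?mul0r ?mulr0.
Qed.

Lemma per_u (u : U) (b : U) :
  (u 0 j == 1)%:R * (n%:R * ((1 - chi u b) / 2%:R * (lambdaF2 v u)^-1)
     - \sum_(i < n) ((1 - chi u (b + v i)) / 2%:R * (lambdaF2 v u)^-1))
  = - ((u 0 j == 1)%:R * chi u b / 2%:R).
Proof.
case: eqP => uj; last by rewrite !mul0r oppr0.
have unz : u != 0 by apply/eqP => u0; move: uj; rewrite u0 mxE.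
have lnz : lambdaF2 v u != 0 by rewrite gt_eqF // lam_pos.
rewrite !mul1r.
have -> : \sum_(i < n) ((1 - chi u (b + v i)) / 2%:R * (lambdaF2 v u)^-1)
   = (n%:R - chi u b * \sum_(i < n) chi u (v i)) / 2%:R * (lambdaF2 v u)^-1.
  rewrite -!mulr_suml sumrB sumr_const card_ord mulr_sumr.
  by do 2 congr (_ * _); congr (_ - _); apply: eq_bigr => i _; rewrite chiD.
move: lnz; rewrite lamE sumrB sumr_const card_ord -[\sum_(i < n) chi u (v i)]/(\sum_(i < n) chi u (v i)).
set s := \sum_(i < n) chi u (v i) => lnz.
by field.
Qed.


Lemma L_K b : n%:R * Kq b - \sum_(i < n) Kq (b + v i)
   = C%:R * ((b == delta_mx 0 j)%:R - (b == 0)%:R).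
Proof.
rewrite K_alt (eq_bigr _ (fun i _ => K_alt (b + v i))) -mulr_sumr.
set c := C%:R * 4%:R / N.
rewrite mulrCA -mulrBr exchange_big /= mulr_sumr -sumrB.
rewrite (eq_bigr (fun u : U => - ((u 0 j == 1)%:R * chi u b / 2%:R))); last first.
  by move=> u _; rewrite -mulr_sumr mulrCA -mulrBr per_u.
rewrite (eq_bigr (fun u : U => - ((chi u b - chi u (delta_mx 0 j + b)) / 4%:R))); last first.
  move=> u _; rewrite ind_sg chiD /chi dot_delta; congr (- _).
  by field.
rewrite sumrN -mulr_suml sumrB !orth addU_eq0.
have ejnz : delta_mx 0 j != 0 :> U.
  by apply/eqP => /matrixP /(_ 0 j); rewrite !mxE !eqxx.
have Nnz : N != 0 by rewrite pnatr_eq0 expn_eq0.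
rewrite /c -/N.
case: (b =P 0) => [->|_]; first by rewrite eq_sym (negbTE ejnz) /=; field.
by case: (b =P delta_mx 0 j) => _ /=; field.
Qed.


Lemma I2_Z (c : int) (p : P) : I2 p -> I2 (c *: p).
Proof. by move=> h; rewrite -[p]mul1r scalerAl; apply: I2_M. Qed.

Lemma claimB : integrality_cond v j C -> in_RG_ideal v (C%:R * ('X_j - 1)).
Proof.
move=> hint.
pose ci (a : U) : int := numq (Kq a).
have hci : forall a, (ci a)%:~R = Kq a.
  move=> a; have := hint a; rewrite -/(Kq a) Qint_def => /eqP hd.
  by rewrite /ci numqE hd mulr1.
pose q0 : P := \sum_(a : U) ci a *: monoF2 a.
apply: (@in_RG_of_I2 _ _ _ _ q0).
set G := (n%:R - _).
pose Q : P := \sum_(a : U) ci a *: (n%:R * monoF2 a)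
             - \sum_(a : U) ci a *: \sum_(i < n) monoF2 (a + v i).
have hQ : I2 (q0 * G - Q).
  rewrite /q0 /G /Q mulr_suml.
  have -> : \sum_(a : U) ci a *: monoF2 a * (n%:R - \sum_(i < n) monoF2 (v i))
     = \sum_(a : U) ci a *: (n%:R * monoF2 a)
       - \sum_(a : U) ci a *: \sum_(i < n) (monoF2 a * monoF2 (v i)).
    rewrite -sumrB; apply: eq_bigr => a _.
    by rewrite -scalerBr -scalerAl mulrBr mulr_sumr mulrC.
  have e : forall A B B' : P, A - B' - (A - B) = - (B' - B).
    by move=> A B B'; ring.
  rewrite e; apply: I2_N; rewrite -sumrB.
  apply: I2_sum => a _; rewrite -scalerBr; apply: I2_Z.
  rewrite -sumrB; apply: I2_sum => i _; exact: mono_mul.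
have -> : C%:R * ('X_j - 1) - q0 * G = - (q0 * G - Q) + (C%:R * ('X_j - 1) - Q).
  by clear hQ; move: (C%:R * _) (q0 * G) Q => A B D; ring.
suff -> : C%:R * ('X_j - 1) - Q = 0 by rewrite addr0; apply: I2_N.
apply/eqP; rewrite subr_eq0; apply/eqP.
have -> : Q = \sum_(b : U) (n%:R * ci b - \sum_(i < n) ci (b + v i)) *: monoF2 b.
  rewrite /Q; symmetry; under eq_bigr do rewrite scalerBl scaler_suml.
  rewrite sumrB; congr (_ - _).
    by apply: eq_bigr => b _; rewrite !mulr_natl -scalerMnl -scalerMnr.
  rewrite [RHS](eq_bigr (fun a => \sum_(i < n) ci a *: monoF2 (a + v i))); last first.
    by move=> a _; rewrite scaler_sumr.
  rewrite exchange_big [RHS]exchange_big /=; apply: eq_bigr => i _.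
  rewrite [RHS](reindex_inj (addIr (v i))) /=; apply: eq_bigr => b _.
  by rewrite addUK.
have hL : forall b : U, n%:R * ci b - \sum_(i < n) ci (b + v i)
    = C%:R * ((b == delta_mx 0 j)%:R - (b == 0)%:R).
  move=> b; apply: (@intr_inj rat); rewrite !(rmorphB, rmorphM, rmorph_nat, rmorph_sum) /=.
  by rewrite hci (eq_bigr _ (fun i _ => hci (b + v i))) L_K.
rewrite (eq_bigr _ (fun b _ => congr1 (fun z => z *: monoF2 b) (hL b))).
under eq_bigr do rewrite -scalerA scalerBl.
rewrite -scaler_sumr sumrB.
have si : forall e : U, \sum_(i : U) (i == e)%:R *: monoF2 i = monoF2 e.
  move=> e; rewrite (bigD1 e) //= eqxx scale1r big1 ?addr0 // => i /negbTE ->.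
  by rewrite scale0r.
by rewrite !si mono_delta mono0 scaler_nat mulr_natl.
Qed.

End ClaimB.

Theorem mainTheorem8 (r n : nat) (v : 'I_n -> 'rV['F_2]_r) (j : 'I_r) :
  (0 < r)%N ->
  (forall i : 'I_n, v i != 0) ->
  (forall u : 'rV['F_2]_r, exists c : 'I_n -> 'F_2, u = \sum_(i < n) c i *: v i) ->
  exists C : nat, is_addorder_xj v j C /\ least_pos (integrality_cond v j) C.
Proof.
move=> _ _ gen.
pose Pb (C : nat) := (0 < C)%N && [forall w : 'rV['F_2]_r, Kq v j C w \is a Num.int].
have PbE : forall C, Pb C = true <-> (0 < C)%N /\ integrality_cond v j C.
  move=> C; rewrite /Pb; split.
    by case/andP => -> /forallP h; split => // w; apply: h.
  by case=> -> h; apply/forallP => w; apply: h.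
have KqC : forall C w, Kq v j C w = C%:R * Kq v j 1 w.
  by move=> C w; rewrite /Kq mul1r mulrA.
have ex : exists C, Pb C.
  pose C0 := (\prod_(w : 'rV['F_2]_r) `|denq (Kq v j 1 w)|)%N.
  exists C0; apply/PbE; split.
    by rewrite prodn_gt0 // => w; rewrite absz_gt0 denq_neq0.
  move=> w; rewrite -/(Kq v j C0 w) KqC /C0 (bigD1 w) //= natrM [_%:R * _]mulrC -mulrA.
  apply: rpredM; first exact: rpred_nat.
  have -> : (`|denq (Kq v j 1 w)|%:R : rat) = (denq (Kq v j 1 w))%:~R.
    by rewrite natr_absz gtr0_norm // denq_gt0.
  by rewrite mulrC -numqE intr_int.
case: (ex_minnP ex) => m Pm minm.
have [m0 im] := (PbE m).1 Pm.
exists m; split; last first.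
  split => //; split => // C' C0 lt; move=> h.
  by have := minm C' ((PbE C').2 (conj C0 h)); rewrite leqNgt lt.
split => //; split; first exact: claimB.
move=> C' C0 lt /(claimA gen) h.
by have := minm C' ((PbE C').2 (conj C0 h)); rewrite leqNgt lt.
Qed.
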